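(* Let $G$ be a finite simple graph and $u\in V(G)$. Then $A_G(u)=\{1,2,\ldots,\Gamma_G(u)\}$.
   Context: A Grundy-coloring of $G$ is a proper vertex coloring of $G$ with nonempty color classes $C_1,\ldots,C_k$ (vertices of $C_i$ have color $i$) such that for all $i<j$ every vertex of $C_j$ has a neighbor in $C_i$. For $u\in V(G)$, $\Gamma_G(u)$ is the maximum integer $j$ such that there is a Grundy-coloring of $G$ in which $u$ has color $j$, and $A_G(u)$ is the set of all integers $j$ such that there exists a Grundy-coloring of $G$ in which $u$ has color $j$. *)

(* Defs.v *)
From mathcomp Require Import all_boot.
Set Implicit Arguments. Unset Strict Implicit. Unset Printing Implicit Defensive.

Definition simple_graph (T : finType) (e : rel T) : Prop :=
  symmetric e /\ irreflexive e.

(* A Grundy-coloring with k colors, given as a map c : T -> nat, where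
   c x = i means x belongs to class C_i; colors are 1..k. *)
Definition grundy_coloring (T : finType) (e : rel T) (k : nat) (c : T -> nat) : bool :=
  [&& [forall x, 1 <= c x <= k],
      [forall i : 'I_k, [exists x, c x == i.+1]],
      [forall x, forall y, e x y ==> (c x != c y)]
    & [forall x, forall i : 'I_k,
         (i.+1 < c x) ==> [exists y, e x y && (c y == i.+1)]]].

(* j \in A_G(u): some Grundy-coloring (with any number k of colors) gives u color j.
   Since color classes are nonempty, k <= #|T|, and colours fit in 'I_(#|T|.+1). *)
Definition in_A (T : finType) (e : rel T) (u : T) (j : nat) : bool :=
  [exists k : 'I_(#|T|.+1), exists c : {ffun T -> 'I_(#|T|.+1)},
     grundy_coloring e k (fun x => nat_of_ord (c x)) && (nat_of_ord (c u) == j)].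

(* Gamma_G(u) = max A_G(u) (0 if A_G(u) were empty). *)
Definition Gamma (T : finType) (e : rel T) (u : T) : nat :=
  \max_(j < #|T|.+1 | in_A e u j) j.

(* Main.v *)
Require Import Defs.
From mathcomp Require Import all_boot.
From mathcomp Require Import zify.

Section Aux.
Variables (T : finType) (e : rel T).
Hypothesis esym : symmetric e.
Hypothesis eirr : irreflexive e.

Definition properd (d : T -> nat) := forall x y, e x y -> d x != d y.
Definition goodd (d : T -> nat) x :=
  forall i, 0 < i < d x -> exists y, e x y && (d y == i).

Lemma grundy_of (d : T -> nat) u :
  properd d -> (forall x, 0 < d x) -> (forall x, goodd d x) ->
  in_A e u (d u).
Proof.
move=> pd posd gd.
have cT : 0 < #|T| by apply/card_gt0P; exists u.
have [xm Hxm] := eq_bigmax d cT.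
set k := \max_x d x in Hxm.
have dk : forall x, d x <= k by move=> x; exact: leq_bigmax.
have ne : forall i, i < k -> exists x, d x == i.+1.
  move=> i ik; case: (ltnP i.+1 k) => h.
    have := gd xm i.+1; rewrite -Hxm h /= => /(_ isT) [y /andP [_ ?]].
    by exists y.
  by exists xm; rewrite -Hxm; apply/eqP; lia.
have kT : k <= #|T|.
  pose f (i : 'I_k) := odflt u [pick x | d x == i.+1].
  have fP : forall i : 'I_k, d (f i) = i.+1.
    move=> i; rewrite /f; case: pickP => [x /eqP //|].
    by have [x Hx] := ne i (ltn_ord i) => /(_ x); rewrite Hx.
  have : injective f.
    by move=> i j fij; apply/val_inj; have := fP i; rewrite fij fP => -[].
  by move/leq_card; rewrite card_ord.
have dT : forall x, d x < #|T|.+1 by move=> x; have := dk x; lia.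
apply/existsP; exists (inord k); apply/existsP.
exists [ffun x => inord (d x)].
apply/andP; split; last by rewrite ffunE inordK.
rewrite /grundy_coloring inordK; last lia.
apply/and4P; split.
- by apply/forallP => x; rewrite ffunE inordK // posd dk.
- apply/forallP => i; have [x Hx] := ne i (ltn_ord i).
  by apply/existsP; exists x; rewrite ffunE inordK.
- apply/forallP => x; apply/forallP => y; apply/implyP => exy.
  by rewrite !ffunE !inordK //; apply: pd.
- apply/forallP => x; apply/forallP => i; apply/implyP.
  rewrite ffunE inordK // => h.
  have [y /andP [exy /eqP dy]] := gd x i.+1 (h).
  by apply/existsP; exists y; rewrite exy ffunE inordK // dy /=.
Qed.

Lemma repair (S : pred T) : forall n (d : T -> nat), \sum_x d x < n ->
  properd d -> (forall x, 0 < d x) ->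
  (forall x, S x -> forall i, 0 < i < d x -> exists y, [&& S y, e x y & d y == i]) ->
  exists d', [/\ properd d', forall x, 0 < d' x, forall x, goodd d' x
                 & forall x, S x -> d' x = d x].
Proof.
elim=> [//|n IH] d sn pd posd Sd.
pose goodb x := [forall i : 'I_(d x), (0 < i) ==> [exists y, e x y && (d y == i)]].
case: (pickP (fun x => ~~ goodb x)) => [x bx|allg]; last first.
  exists d; split=> // x i /andP [i0 ix].
  have := allg x => /negbFE /forallP /(_ (Ordinal ix)) /=.
  by rewrite i0 /= => /existsP.
have [i0 [i0p i0d i0n]] : exists i, [/\ 0 < i, i < d x & ~~ [exists y, e x y && (d y == i)]].
  move: bx; rewrite negb_forall => /existsP [i]; rewrite negb_imply => /andP [ip hn].
  by exists i.
have exP : exists i, (0 < i) && ~~ [exists y, e x y && (d y == i)].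
  by exists i0; rewrite i0p.
case: (ex_minnP exP) => m /andP [m0 mn] mmin.
have mi0 : m <= i0 by apply: mmin; rewrite i0p.
have xS : ~~ S x.
  apply/negP => Sx; have [y /and3P [_ exy dy]] := Sd x Sx i0 ltac:(by rewrite i0p i0d).
  by move/negP: i0n; apply; apply/existsP; exists y; rewrite exy.
pose d2 y := if y == x then m else d y.
have sum2 : \sum_y d2 y < \sum_y d y.
  rewrite (bigD1 x) //= [X in _ < X](bigD1 x) //= /d2 eqxx.
  rewrite (eq_bigr d); last by move=> y /negbTE ->.
  rewrite ltn_add2r; lia.
have pd2 : properd d2.
  move=> a b eab; rewrite /d2.
  case: (eqVneq a x) => [ax|ax]; case: (eqVneq b x) => [bx'|bx'].
  - by subst; rewrite eirr in eab.
  - apply/eqP => hm; move/negP: mn; apply; apply/existsP; exists b.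
    by rewrite -ax eab hm eqxx.
  - apply/eqP => hm; move/negP: mn; apply; apply/existsP; exists a.
    by rewrite -bx' esym eab hm eqxx.
  - exact: pd.
have pos2 : forall y, 0 < d2 y by move=> y; rewrite /d2; case: (y == x).
have [|d' [p1 p2 p3 p4]] := IH d2 (leq_trans sum2 sn) pd2 pos2; last first.
  exists d'; split=> // y Sy; rewrite p4 // /d2.
  by case: eqP => // yx; subst; rewrite Sy in xS.
move=> y Sy i hi.
have yx : (y == x) = false by apply/negbTE; apply/eqP => yx; subst; rewrite Sy in xS.
move: hi; rewrite /d2 yx => hi.
have [z /and3P [Sz eyz dz]] := Sd y Sy i hi.
exists z; rewrite Sz eyz /=.
have -> : (z == x) = false by apply/negbTE; apply/eqP => zx; subst; rewrite Sz in xS.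
done.
Qed.

End Aux.

Theorem proposition1 (T : finType) (e : rel T) (u : T) :
  simple_graph e ->
  forall j : nat, in_A e u j <-> (1 <= j <= Gamma e u).
Proof.
move=> [esym eirr] j; split.
  move=> hA; have := hA => /existsP [k /existsP [c /andP [g /eqP cu]]].
  move: g => /and4P [/forallP /(_ u) /andP [h1 _] _ _ _].
  rewrite -cu h1 /= /Gamma.
  have := ltn_ord (c u) => cuT.
  by have := @leq_bigmax_cond _ (fun i : 'I_#|T|.+1 => in_A e u i) (fun i => nat_of_ord i) (c u) ltac:(by rewrite /= cu).
move=> /andP [j1 jG].
case: (pickP (fun i : 'I_#|T|.+1 => in_A e u i)) => [m0 hm0|none]; last first.
  move: jG; rewrite /Gamma big1 ?leqn0 => [/eqP j0|i hi]; first by rewrite j0 in j1.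
  by rewrite none in hi.
have [m hm Gm] := @eq_bigmax_cond _ (fun i : 'I_#|T|.+1 => in_A e u i) (fun i => nat_of_ord i) ltac:(by apply/card_gt0P; exists m0).
rewrite /Gamma Gm in jG.
move: hm; rewrite unfold_in => /existsP [k /existsP [c /andP [g /eqP cu]]].
move: g => /and4P [/forallP cpos _ /forallP cpr /forallP cgr].
set s := m - j.
pose S := fun x => s < c x.
pose d x := if s < c x then c x - s else c x + k.
have posc : forall x, 1 <= c x <= k by move=> x; have := cpos x.
have pd : properd T e d.
  move=> x y exy; have := cpr x => /forallP /(_ y); rewrite exy /= => cxy.
  have := posc x; have := posc y; rewrite /d.
  case: ifP => hx; case: ifP => hy; move: cxy hx hy; clearbody s; move=> cxy hx hy p1 p2;
   (have {}cxy : nat_of_ord (c x) <> nat_of_ord (c y) by apply/eqP; exact: cxy);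
   apply/eqP; lia.

have posd : forall x, 0 < d x by move=> x; have := posc x; rewrite /d; case: ifP; lia.
have Sd : forall x, S x -> forall i, 0 < i < d x -> exists y, [&& S y, e x y & d y == i].
  move=> x Sx i; have Sx2 : s < c x := Sx; rewrite /d Sx2 => hi.
  have ik : i + s - 1 < k by have := posc x; lia.
  have := cgr x => /forallP /(_ (Ordinal ik)) /implyP /=.
  have -> : (i + s - 1).+1 = i + s by lia.
  have h2 : i + s < c x by move: hi; clear; lia.
  move=> /(_ h2) /existsP [y /andP [exy /eqP cy]].
  exists y; rewrite exy /S /d cy.
  have -> : s < i + s by lia.
  apply/eqP; lia.
have [d' [p1 p2 p3 p4]] := @repair T e esym eirr S _ d (ltnSn _) pd posd Sd.
have := @grundy_of T e d' u p1 p2 p3.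
have Su : s < c u by rewrite cu; lia.
rewrite p4 // /d Su cu.
by have -> : m - s = j by lia.
Qed.
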